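(* $\mathrm{Log}_{=1}(\mathbb{R})=\mathrm{Log}_{=1}(\mathbb{Q})$.
   Context: Modal formulas are built from a countable set of propositional variables using $\bot$, $\to$ and one unary modality $\lozenge$. A frame is a pair $(X,R)$; a valuation assigns subsets of $X$ to variables; $x\models\lozenge\varphi$ iff there is $y$ with $xRy$ and $y\models\varphi$. A formula is valid in a frame if true at every point under every valuation. For a metric space $(X,d)$, $\mathrm{Log}_{=1}(X)$ is the set of modal formulas valid in the frame $(X,R_{=1})$, where $xR_{=1}y$ iff $d(x,y)=1$. $\mathbb{R}$ and $\mathbb{Q}$ carry the metric $d(x,y)=|x-y|$. *)

(* Defs.v *)
From Stdlib Require Import Reals QArith.
Open Scope R_scope.

Inductive form : Type :=
| Var : nat -> form
| Bot : form
| Imp : form -> form -> form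
| Dia : form -> form.

Fixpoint sat {X : Type} (Rel : X -> X -> Prop) (V : nat -> X -> Prop)
  (x : X) (phi : form) : Prop :=
  match phi with
  | Var n => V n x
  | Bot => False
  | Imp a b => sat Rel V x a -> sat Rel V x b
  | Dia a => exists y, Rel x y /\ sat Rel V y a
  end.

Definition valid_in {X : Type} (Rel : X -> X -> Prop) (phi : form) : Prop :=
  forall (V : nat -> X -> Prop) (x : X), sat Rel V x phi.

Definition R_eq1 {X : Type} (d : X -> X -> R) (x y : X) : Prop := d x y = 1.

Definition Log_eq1 {X : Type} (d : X -> X -> R) (phi : form) : Prop :=
  valid_in (R_eq1 d) phi.

Definition dR (x y : R) : R := Rabs (x - y).

(* The rationals, as the subspace of R consisting of the values of rationals
   (so points are canonical), with the induced metric |x - y|. *)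
Definition Qpt : Type := { x : R | exists q : Q, x = Q2R q }.
Definition dQ (x y : Qpt) : R := Rabs (proj1_sig x - proj1_sig y).

(* Main.v *)
Require Import Defs.
From Stdlib Require Import Reals QArith Qreals Lra Lia ZArith.
Open Scope R_scope.

Definition RelZ (m n : Z) : Prop := (n = m + 1 \/ n = m - 1)%Z.

Section Gen.
Context {X : Type} (Rel : X -> X -> Prop) (f : Z -> X)
  (Hf : forall m n, RelZ m n -> Rel (f m) (f n))
  (Hb : forall m y, Rel (f m) y -> exists n, RelZ m n /\ y = f n).

Lemma pmorph_sat : forall phi V n,
  sat Rel V (f n) phi <-> sat RelZ (fun k m => V k (f m)) n phi.
Proof.
  induction phi as [k| |a IHa b IHb|a IHa]; intros V n; simpl.
  - tauto.
  - tauto.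
  - rewrite IHa, IHb; tauto.
  - split.
    + intros [y [Hy Hs]]. destruct (Hb _ _ Hy) as [m [Hm ->]].
      exists m; split; [exact Hm| apply IHa; exact Hs].
    + intros [m [Hm Hs]]. exists (f m); split; [apply Hf; exact Hm| apply IHa; exact Hs].
Qed.
End Gen.

Lemma sat_ext {X : Type} (Rel : X -> X -> Prop) : forall phi V W x,
  (forall k y, V k y <-> W k y) -> (sat Rel V x phi <-> sat Rel W x phi).
Proof.
  induction phi as [k| |a IHa b IHb|a IHa]; intros V W x H; simpl.
  - apply H.
  - tauto.
  - rewrite (IHa V W x H), (IHb V W x H); tauto.
  - split; intros [y [Hy Hs]]; exists y; split; auto;
      [apply (IHa V W y H)| apply (IHa V W y H)]; exact Hs.
Qed.

Lemma frame_eq {X : Type} (Rel : X -> X -> Prop)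
  (F : X -> Z -> X)
  (HF0 : forall x, F x 0%Z = x)
  (Hf : forall x m n, RelZ m n -> Rel (F x m) (F x n))
  (Hb : forall x m y, Rel (F x m) y -> exists n, RelZ m n /\ y = F x n)
  (x0 : X) (Hinj : forall m n, F x0 m = F x0 n -> m = n) :
  forall phi, valid_in Rel phi <-> valid_in RelZ phi.
Proof.
  intros phi; split; intros H.
  - intros U n.
    set (V := fun k y => exists m, y = F x0 m /\ U k m).
    specialize (H V (F x0 n)).
    apply (pmorph_sat Rel (F x0) (Hf x0) (Hb x0)) in H.
    revert H; apply sat_ext.
    intros k y; unfold V; cbv beta; idtac; split.
    + intros Hu; exists y; auto.
    + intros [m [Hm Hu]]. apply Hinj in Hm; subst; exact Hu.
  - intros V x. rewrite <- (HF0 x).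
    apply (pmorph_sat Rel (F x) (Hf x) (Hb x)). apply H.
Qed.

Lemma abs1 (a b : R) : Rabs (a - b) = 1 -> b = a - 1 \/ b = a + 1.
Proof.
  intros H. destruct (Rcase_abs (a - b)) as [Hl|Hl];
  [rewrite Rabs_left in H by exact Hl | rewrite Rabs_right in H by exact Hl]; lra.
Qed.

Lemma relZ_R (x : R) m n : RelZ m n -> Rabs (x + IZR m - (x + IZR n)) = 1.
Proof.
  intros [-> | ->]; rewrite ?plus_IZR, ?minus_IZR.
  - replace (x + IZR m - (x + (IZR m + 1))) with (-1) by ring.
    unfold Rabs; destruct Rcase_abs; lra.
  - replace (x + IZR m - (x + (IZR m - 1))) with 1 by ring.
    unfold Rabs; destruct Rcase_abs; lra.
Qed.

Lemma back_R (x : R) m y : Rabs (x + IZR m - y) = 1 ->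
  exists n, RelZ m n /\ y = x + IZR n.
Proof.
  intros H. apply abs1 in H. destruct H as [H|H].
  - exists (m - 1)%Z; split; [right; reflexivity|]. rewrite minus_IZR; lra.
  - exists (m + 1)%Z; split; [left; reflexivity|]. rewrite plus_IZR; lra.
Qed.

Lemma valid_R phi : Log_eq1 dR phi <-> valid_in RelZ phi.
Proof.
  unfold Log_eq1.
  apply (frame_eq (R_eq1 dR) (fun x n => x + IZR n) (fun x => ltac:(simpl; ring))
           (fun x m n H => relZ_R x m n H) (fun x m y H => back_R x m y H) 0).
  intros m n H. apply eq_IZR. lra.
Qed.

Lemma Qpt_shift_pf (x : Qpt) (n : Z) : exists q : Q, proj1_sig x + IZR n = Q2R q.
Proof.
  destruct x as [r [q ->]]. exists (q + inject_Z n)%Q. simpl.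
  rewrite Q2R_plus. f_equal. unfold Q2R, inject_Z. simpl. field.
Qed.

Definition Qshift (x : Qpt) (n : Z) : Qpt := exist _ _ (Qpt_shift_pf x n).

Lemma Qpt_eq (a b : Qpt) : proj1_sig a = proj1_sig b -> a = b.
Proof.
  destruct a as [a pa], b as [b pb]; simpl; intros ->.
  f_equal. apply Classical_Prop.proof_irrelevance.
Qed.

Lemma Q0_pf : exists q : Q, (0:R) = Q2R q.
Proof. exists 0%Q. unfold Q2R; simpl. field. Qed.
Definition Q0 : Qpt := exist _ 0 Q0_pf.

Lemma valid_Q phi : Log_eq1 dQ phi <-> valid_in RelZ phi.
Proof.
  unfold Log_eq1.
  apply (frame_eq (R_eq1 dQ) Qshift) with (x0 := Q0).
  - intros x. apply Qpt_eq. simpl. ring.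
  - intros x m n H. unfold R_eq1, dQ. simpl. apply relZ_R; exact H.
  - intros x m y H. unfold R_eq1, dQ in H. simpl in H.
    destruct (back_R _ _ _ H) as [n [Hn Hy]]. exists n; split; auto.
    apply Qpt_eq. simpl. exact Hy.
  - intros m n H. apply (f_equal (@proj1_sig _ _)) in H. simpl in H.
    apply eq_IZR. lra.
Qed.

Theorem proposition4p1 :
  forall phi : form, Log_eq1 dR phi <-> Log_eq1 dQ phi.
Proof.
  intros phi. rewrite valid_R, valid_Q. tauto.
Qed.
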